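(* For every function $g:(0,\tfrac12)\to\mathbb N$ there is a (possibly infinite) family of graphs $\mathcal F$ with $C_4\in\mathcal F$ and a sequence $(\varepsilon_k)_{k\ge1}$ of positive reals with $\varepsilon_k\to0$, such that for every $k\ge1$ there is $n_0(k)$ so that for every $n\ge n_0(k)$ there is an $n$-vertex graph $G$ which is $\varepsilon_k$-far from being induced $\mathcal F$-free, and yet every induced subgraph of $G$ on $g(\varepsilon_k)$ vertices is induced $\mathcal F$-free.
   Context: A graph is induced $\mathcal F$-free if it contains no induced subgraph isomorphic to any $F\in\mathcal F$. An $n$-vertex graph $G$ is $\varepsilon$-far from satisfying a property $\mathcal P$ if one must add and/or delete at least $\varepsilon n^2$ edges of $G$ in order to obtain a graph satisfying $\mathcal P$. *)

(* Defs.v *)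
From mathcomp Require Import all_boot.
From Stdlib Require Import Reals.

Set Implicit Arguments.
Unset Strict Implicit.
Unset Printing Implicit Defensive.

Record graph := Graph {
  gsize : nat;
  gadj : rel 'I_gsize;
  gsym : symmetric gadj;
  girr : irreflexive gadj }.
Arguments gadj : clear implicits.

Definition induced_copy (F G : graph) : Prop :=
  exists f : 'I_(gsize F) -> 'I_(gsize G),
    injective f /\ forall x y, gadj G (f x) (f y) = gadj F x y.

Definition induced_free (Fam : graph -> Prop) (G : graph) : Prop :=
  forall F, Fam F -> ~ induced_copy F G.

Definition edit_dist (n : nat) (e1 e2 : rel 'I_n) : nat :=
  #|[set p : 'I_n * 'I_n | (p.1 < p.2)%N && (e1 p.1 p.2 != e2 p.1 p.2)]|.

Definition far_from_free (eps : R) (Fam : graph -> Prop) (G : graph) : Prop :=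
  forall (e : rel 'I_(gsize G)) (es : symmetric e) (ei : irreflexive e),
    induced_free Fam (@Graph (gsize G) e es ei) ->
    (eps * INR (gsize G) ^ 2 <= INR (edit_dist (gadj G) e))%R.

Lemma sub_sym (G : graph) m (f : 'I_m -> 'I_(gsize G)) :
  symmetric (fun x y => gadj G (f x) (f y)).
Proof. by move=> x y; rewrite gsym. Qed.

Lemma sub_irr (G : graph) m (f : 'I_m -> 'I_(gsize G)) :
  irreflexive (fun x y => gadj G (f x) (f y)).
Proof. by move=> x; rewrite girr. Qed.

Definition induced_sub (G : graph) m (f : 'I_m -> 'I_(gsize G)) : graph :=
  @Graph m (fun x y => gadj G (f x) (f y)) (sub_sym f) (sub_irr f).

(* The 4-cycle 0-1-2-3-0: i ~ j iff i + j is odd. *)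
Definition C4_adj : rel 'I_4 := fun x y => odd (x + y).

Lemma C4_sym : symmetric C4_adj.
Proof. by move=> x y; rewrite /C4_adj addnC. Qed.

Lemma C4_irr : irreflexive C4_adj.
Proof. by move=> x; rewrite /C4_adj addnn odd_double. Qed.

Definition C4 : graph := @Graph 4 C4_adj C4_sym C4_irr.
Arguments induced_sub G {m} f.

(* Main.v *)
Require Import Defs.
From mathcomp Require Import all_boot.
From Stdlib Require Import Reals.
From mathcomp Require Import zify.
From Stdlib Require Import Lia Lra.
From mathcomp Require Import ssrnat.
Set Implicit Arguments.
Unset Strict Implicit.
Unset Printing Implicit Defensive.
Local Open Scope nat_scope.

Definition cadj (m a b : nat) : bool :=
  [|| a == b, a.+1 == b, b.+1 == a, (a == 0) && (b.+1 == m) | (b == 0) && (a.+1 == m)].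

Lemma cadjP m a b : reflect (a = b \/ a.+1 = b \/ b.+1 = a \/ (a = 0 /\ b.+1 = m) \/ (b = 0 /\ a.+1 = m)) (cadj m a b).
Proof.
rewrite /cadj; apply: (iffP idP).
- by move/orP=> [/eqP|/orP[/eqP|/orP[/eqP|/orP[/andP[/eqP ? /eqP]|/andP[/eqP ? /eqP]]]]]; lia.
- by case=> [->|[<-|[<-|[[-> <-]|[-> <-]]]]]; rewrite !eqxx ?orbT.
Qed.

Lemma cadjC m a b : cadj m a b = cadj m b a.
Proof. by apply/idP/idP => /cadjP H; apply/cadjP; lia. Qed.

Lemma hole_abs m L (p : nat -> nat) : 4 <= L -> L != m ->
  (forall x, x < L -> p x < m) ->
  (forall x y, x < L -> y < L -> x != y -> cadj m (p x) (p y) = cadj L x y) -> False.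
Proof.
move=> L4 Lm pm A.
have pinj x y : x < L -> y < L -> p x = p y -> x = y.
  move=> xL yL pxy; apply/eqP; apply/negPn/negP => nxy.
  have cxy := A x y xL yL nxy; rewrite pxy in cxy.
  have : cadj L x y by rewrite -cxy; apply/cadjP; left.
  have key x1 y1 : x1 < L -> y1 < L -> p x1 = p y1 ->
      (y1 = x1.+1 \/ (x1.+1 = L /\ y1 = 0)) -> False.
    move=> x1L y1L pe hy.
    pose z := if y1.+1 == L then 0 else y1.+1.
    have zL : z < L by rewrite /z; case: ifP => /eqP; lia.
    have zx : z != x1 by rewrite /z; case: ifP => /eqP; lia.
    have zy : y1 != z by rewrite /z; case: ifP => /eqP; lia.
    have y1x1 : y1 != x1 by lia.
    have cyz : cadj L y1 z by apply/cadjP; rewrite /z; case: ifP => /eqP; lia.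
    rewrite -(A _ _ y1L zL zy) -pe (A _ _ x1L zL) in cyz; last by rewrite eq_sym.
    by move/cadjP: cyz; rewrite /z; case: ifP => /eqP; lia.
  move/cadjP => H.
  have [H1|H1] : (y = x.+1 \/ (x.+1 = L /\ y = 0)) \/ (x = y.+1 \/ (y.+1 = L /\ x = 0)) by lia.
  - exact: (key x y).
  - exact: (key y x).
have Lm' : L < m.
  have g_ok (x : 'I_L) : p x < m by apply: pm.
  have : injective (fun x : 'I_L => Ordinal (g_ok x)).
    by move=> x y [] /(pinj _ _ (ltn_ord x) (ltn_ord y)) /val_inj.
  move/leq_card; rewrite !card_ord => LLm; lia.
pose sm a := if a.+1 == m then 0 else a.+1.
pose inI b := [exists y : 'I_L, p y == b].
have [x [xL hx]] : exists x, x < L /\ forall y, y < L -> p y != sm (p x).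
  have notall : exists b, (b < m) && ~~ inI b.
    pose img := [set Ordinal (pm _ (ltn_ord y)) | y in 'I_L].
    have : ~~ ([set: 'I_m] \subset img).
      apply/negP => /subset_leq_card; rewrite cardsT card_ord.
      move=> /leq_trans /(_ (leq_imset_card _ _)); rewrite card_ord; lia.
    case/subsetPn => b _ bni; exists b; rewrite ltn_ord /=.
    apply/negP => /existsP [y /eqP py]; move: bni; apply/negP/negPn.
    by apply/imsetP; exists y => //; apply: val_inj.
  have [I0|NI0] := boolP (inI 0).
  - case: (ex_minnP notall) => b0 /andP [b0m b0n] bmin.
    have b0pos : 0 < b0 by case: b0 b0m b0n {bmin} => // _; rewrite I0.
    have : inI b0.-1.
      case: (boolP (inI b0.-1)) => // nb.
      have := bmin b0.-1; rewrite nb andbT.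
      have -> : b0.-1 < m by lia.
      move=> /(_ isT); lia.
    case/existsP => x /eqP px; exists x; split => // y yL.
    rewrite px /sm; case: ifP => [/eqP|_]; first lia.
    rewrite prednK //; apply/negP => /eqP py; move: b0n; rewrite /inI.
    by apply/negP/negPn/existsP; exists (Ordinal yL); rewrite /= py.
  - have ex : exists b, inI b by exists (p 0); apply/existsP; exists (Ordinal (leq_trans (isT : 0 < 4) L4)).
    have bnd : forall b, inI b -> b <= m by move=> b /existsP [y /eqP <-]; apply/ltnW/pm.
    case: (ex_maxnP ex bnd) => a0 Ia0 amax.
    case/existsP: (Ia0) => x /eqP px; exists x; split => // y yL.
    rewrite px /sm; case: ifP => [_|/eqP hne].
    + apply/negP => /eqP py; move: NI0; apply/negP/negPn/existsP; exists (Ordinal yL); by rewrite /= py.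
    + apply/negP => /eqP py.
      have : inI a0.+1 by apply/existsP; exists (Ordinal yL); rewrite /= py.
      by move/amax; rewrite ltnn.
pose xp := if x.+1 == L then 0 else x.+1.
pose xm := if x == 0 then L.-1 else x.-1.
have xpL : xp < L by rewrite /xp; case: ifP => /eqP; lia.
have xmL : xm < L by rewrite /xm; case: ifP => /eqP; lia.
have xpx : x != xp by rewrite /xp; case: ifP => /eqP; lia.
have xmx : x != xm by rewrite /xm; case: ifP => /eqP; lia.
have xpm : xp != xm by rewrite /xp /xm; case: ifP => /eqP; case: ifP => /eqP; lia.
have c1 : cadj m (p x) (p xp) by rewrite A //; apply/cadjP; rewrite /xp; case: ifP => /eqP; lia.
have c2 : cadj m (p x) (p xm) by rewrite A //; apply/cadjP; rewrite /xm; case: ifP => /eqP; lia.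
have n1 : p x != p xp by apply/negP => /eqP /pinj; move: xpx => /eqP; auto.
have n2 : p x != p xm by apply/negP => /eqP /pinj; move: xmx => /eqP; auto.
have s1 := hx _ xpL; have s2 := hx _ xmL.
have : p xp = p xm.
  move: s1 s2 n1 n2 c1 c2 (pm _ xL) (pm _ xpL) (pm _ xmL); rewrite /sm.
  case: ifP => /eqP; move=> ? ? ? ? ? /cadjP ? /cadjP; lia.
by move/pinj => /(_ xpL xmL) /eqP; rewrite (negbTE xpm).
Qed.

Definition cyc_adj m n : rel 'I_n := fun u v => (u != v) && cadj m (u %% m) (v %% m).
Arguments cyc_adj : clear implicits.
Lemma cyc_sym m n : symmetric (cyc_adj m n).
Proof. by move=> u v; rewrite /cyc_adj eq_sym cadjC. Qed.
Lemma cyc_irr m n : irreflexive (cyc_adj m n).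
Proof. by move=> u; rewrite /cyc_adj eqxx. Qed.
Definition cyc m n : graph := @Graph n (cyc_adj m n) (@cyc_sym m n) (@cyc_irr m n).

Lemma no_hole_graph m N L (h : nat -> 'I_N) : 4 <= L -> L != m -> 0 < m ->
  (forall x y, x < L -> y < L -> h x = h y -> x = y) ->
  (forall x y, x < L -> y < L -> cyc_adj m N (h x) (h y) = (x != y) && cadj L x y) -> False.
Proof.
move=> L4 Lm m0 hinj hA; apply: (@hole_abs m L (fun x => h x %% m)) => //.
- by move=> x _; rewrite ltn_pmod.
- move=> x y xL yL nxy; have := hA x y xL yL; rewrite nxy /cyc_adj.
  have -> // : h x != h y.
  by apply/negP=> /eqP /hinj => /(_ xL yL) /eqP; rewrite (negbTE nxy).
Qed.

Lemma no_C4 m n : 5 <= m -> ~ induced_copy C4 (cyc m n).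
Proof.
move=> m5 [f [finj fA]].
apply: (@no_hole_graph m n 4 (fun x => f (inord x))) => //; try lia.
- by move=> x y xl yl /finj /(congr1 (@nat_of_ord _)); rewrite !inordK.
- move=> x y xl yl; have := fA (inord x) (inord y); rewrite /= => ->.
  rewrite /C4_adj /= !inordK //.
  by case: x xl => [|[|[|[|x]]]] // _; case: y yl => [|[|[|[|y]]]].
Qed.

Lemma no_blow m n mj tj : 4 <= mj -> mj != m -> 0 < m -> 0 < tj ->
  ~ induced_copy (cyc mj (mj * tj)) (cyc m n).
Proof.
move=> mj4 mjm m0 t0 [f [finj fA]].
have pos : 0 < mj * tj by rewrite muln_gt0 t0 andbT; lia.
pose d : 'I_(mj * tj) := Ordinal pos.
have ok x : x < mj -> x < mj * tj by move=> xl; apply: (leq_trans xl); rewrite leq_pmulr.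
apply: (@no_hole_graph m n mj (fun x => f (insubd d x))) => //.
- move=> x y xl yl /finj /(congr1 (@nat_of_ord _)); rewrite !val_insubd !ok //.
- move=> x y xl yl; have := fA (insubd d x) (insubd d y); rewrite /= => ->.
  rewrite /cyc_adj -val_eqE !val_insubd !ok // !modn_small //.
Qed.

Lemma copy_sub F G m (f : 'I_m -> 'I_(gsize G)) :
  injective f -> induced_copy F (induced_sub G f) -> induced_copy F G.
Proof.
move=> fi [g [gi gA]]; exists (f \o g); split; first exact: inj_comp.
by move=> x y; rewrite -gA.
Qed.

Lemma copy_size F G : induced_copy F G -> gsize F <= gsize G.
Proof. by case=> f [fi _]; have := leq_card f fi; rewrite !card_ord. Qed.

Lemma C4_of n (e : rel 'I_n) (es : symmetric e) (ei : irreflexive e)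
  (a0 a1 a2 a3 : 'I_n) : e a0 a1 -> e a1 a2 -> e a2 a3 -> e a3 a0 ->
  ~~ e a0 a2 -> ~~ e a1 a3 -> a0 != a2 -> a1 != a3 ->
  induced_copy C4 (@Graph n e es ei).
Proof.
move=> e01 e12 e23 e30 n02 n13 d02 d13.
have ne x y : e x y -> x != y by move=> exy; apply/negP => /eqP E; rewrite E ei in exy.
have d01 := ne _ _ e01; have d12 := ne _ _ e12; have d23 := ne _ _ e23; have d30 := ne _ _ e30.
exists (fun x : 'I_4 => nth a0 [:: a0; a1; a2; a3] x); split.
- move=> [[|[|[|[|x]]]] hx] [[|[|[|[|y]]]] hy] //= E; apply: val_inj => //=;
  move: d01 d12 d23 d30 d02 d13; rewrite E ?eqxx //= ?(eq_sym a0) ?(eq_sym a1) ?(eq_sym a2) ?eqxx //=.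
- move=> [[|[|[|[|x]]]] hx] [[|[|[|[|y]]]] hy] //=; rewrite /C4_adj /= ?ei //;
  rewrite ?(es a1 a0) ?(es a2 a1) ?(es a3 a2) ?(es a0 a3) ?(es a2 a0) ?(es a3 a1) //;
  by apply/negbTE.
Qed.

Lemma card_bigcup_le (T I : finType) (P : pred I) (F : I -> {set T}) :
  #|\bigcup_(i | P i) F i| <= \sum_(i | P i) #|F i|.
Proof.
apply: (big_ind2 (fun (S : {set T}) k => #|S| <= k)) => //; first by rewrite cards0.
move=> S1 k1 S2 k2 h1 h2; apply: leq_trans (leq_card_setU _ _) _; exact: leq_add.
Qed.

Lemma arith1 m n hh D E M : 2 <= m -> M = 4*m*(m+2) -> hh * D.+1 <= 2*E -> 64*m^3*E < n^2 -> n < D.+1 * M -> 4*m*hh < n.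
Proof.
move=> m2 EM h2 hE hD.
have Mp : 0 < M by rewrite EM; lia.
have s1 : hh * n <= hh * (D.+1 * M) by rewrite leq_mul2l ltnW ?orbT.
set K := 64 * m^3.
have Kp : 0 < K by rewrite /K; lia.
have s2 : hh * D.+1 * K <= 2 * E * K by rewrite leq_mul2r h2 orbT.
have s3 : E * K < n^2 by rewrite mulnC.
have s4 : hh * n * K <= hh * D.+1 * K * M by nia.
have s5 : hh * D.+1 * K * M <= 2 * E * K * M by nia.
have s6 : 2 * E * K * M < 2 * n^2 * M by nia.
have s7 : hh * n * K < 2 * n^2 * M by lia.
have s8 : hh * K < 2 * n * M by nia.
rewrite /K EM in s8.
have s9 : hh * 8 * m^2 < n * (m + 2) by nia.
nia.
Qed.

Lemma arith2 m n t q hh D M P L S T U : 2 <= m -> M = 4*m*(m+2) -> n < q.+1 * m ->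
  q <= P -> P <= L + hh -> L <= S + (2 + 2*D) -> S <= T + U -> U <= m * D ->
  4*m*hh < n -> D * M <= n -> 2*m*t + 6*m < n -> t <= T.
Proof.
move=> m2 EM hq hP hL hS hT hU hh4 hD hn.
have : 4 * m * q <= 4 * m * (T + hh + 2 + (m + 2) * D) by nia.
have : 4 * m * (m+2) * D <= n by rewrite -EM mulnC.
nia.
Qed.

Lemma core m n t (e : rel 'I_n) (es : symmetric e) (ei : irreflexive e) :
  ~ induced_copy C4 (@Graph n e es ei) -> 2 <= m ->
  64 * m^3 * edit_dist (cyc_adj m n) e < n^2 -> 2*m*t + 6*m < n ->
  induced_copy (cyc m (m*t)) (@Graph n e es ei).
Proof.
move=> noC4 m2 hE hn.
have m0 : 0 < m by lia.
have C4c (a0 a1 a2 a3 : 'I_n) : e a0 a1 -> e a1 a2 -> e a2 a3 -> e a3 a0 ->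
  ~~ e a0 a2 -> ~~ e a1 a3 -> a0 != a2 -> a1 != a3 -> False.
  by move=> *; apply: noC4; apply: (@C4_of n e es ei a0 a1 a2 a3).
pose bad u v := e u v != cyc_adj m n u v.
have badC u v : bad u v = bad v u by rewrite /bad es cyc_sym.
pose B u := [set v | bad u v].
pose d u := #|B u|.
set E := edit_dist _ _ in hE.
have sumd : \sum_u d u <= 2 * E.
  have -> : \sum_u d u = #|[set p : 'I_n * 'I_n | bad p.1 p.2]|.
    rewrite -sum1_card.
    rewrite (eq_bigl (fun p : 'I_n * 'I_n => true && bad p.1 p.2)); last by move=> p; rewrite inE.
    rewrite -(pair_big_dep xpredT (fun u v => bad u v) (fun _ _ => 1)).
    by apply: eq_bigr => u _; rewrite /d -sum1_card; apply: eq_bigl => v; rewrite inE.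
  pose Es := [set p : 'I_n * 'I_n | (p.1 < p.2) && (cyc_adj m n p.1 p.2 != e p.1 p.2)].
  have EE : E = #|Es| by [].
  have sub : [set p : 'I_n * 'I_n | bad p.1 p.2] \subset Es :|: [set (q.2, q.1) | q in Es].
    apply/subsetP => [[u v]]; rewrite !inE /= => buv.
    have nuv : u != v by apply/negP => /eqP E1; move: buv; rewrite E1 /bad ei cyc_irr.
    case: (ltngtP u v) => [luv|lvu|/val_inj E1]; last by rewrite E1 eqxx in nuv.
    - by apply/orP; left; rewrite /= eq_sym.
    - apply/orP; right; apply/imsetP; exists (v, u) => //.
      by rewrite inE /= lvu eq_sym cyc_sym es.
  apply: leq_trans (subset_leq_card sub) _.
  apply: leq_trans (leq_card_setU _ _) _.
  by rewrite EE mul2n -addnn leq_add2l leq_imset_card.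
pose M := 4 * m * (m + 2).
pose D := n %/ M.
pose high := [set u | D < d u].
have h2 : #|high| * D.+1 <= 2 * E.
  apply: leq_trans sumd; rewrite -sum_nat_const.
  apply: (@leq_trans (\sum_(u in high) d u)).
    by apply: leq_sum => u; rewrite inE.
  rewrite [X in _ <= X](bigID (fun u => u \in high)) /=; exact: leq_addr.
pose P j := [set v : 'I_n | v %% m == j].
have h3 j : j < m -> n %/ m <= #|P j|.
  move=> jm.
  have ok (k : 'I_(n %/ m)) : k * m + j < n.
    have := ltn_ord k => kq.
    have : k.+1 * m <= n %/ m * m by rewrite leq_mul2r kq orbT.
    have := leq_trunc_div n m; rewrite mulSn; lia.
  pose g (k : 'I_(n %/ m)) : 'I_n := Ordinal (ok k).
  have gi : injective g.
    move=> k1 k2 /(congr1 (@nat_of_ord _)) /= /eqP; rewrite eqn_add2r eqn_mul2r.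
    by case/orP => [/eqP|/eqP/val_inj] //; lia.
  have : [set g k | k in 'I_(n %/ m)] \subset P j.
    by apply/subsetP => v /imsetP [k _ ->]; rewrite inE /= modnMDl modn_small.
  by move/subset_leq_card; rewrite card_imset // card_ord.
pose L j := P j :\: high.
pose pk j := [pick q : 'I_n * 'I_n | [&& q.1 \in L j, q.2 \in L j, q.1 != q.2 & ~~ e q.1 q.2]].
pose S j := if pk j is Some q then L j :\: (q.1 |: (q.2 |: (B q.1 :|: B q.2))) else L j.
have SL j : S j \subset L j.
  by rewrite /S; case: (pk j) => [q|] //; apply: subsetDl.
have Spart j v : v \in S j -> v %% m = j.
  by move=> /(subsetP (SL j)); rewrite !inE => /andP [_ /eqP].
have Slow j v : v \in S j -> d v <= D.
  by move=> /(subsetP (SL j)); rewrite !inE => /andP [] ; rewrite -leqNgt.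
have Lpart j w : w \in L j -> w %% m = j.
  by rewrite !inE => /andP [_ /eqP].
have sameG (u v : 'I_n) : u %% m = v %% m -> u != v -> cyc_adj m n u v.
  by move=> E1 nuv; rewrite /cyc_adj nuv E1; apply/cadjP; left.
have nbadE (u v : 'I_n) : ~~ bad u v -> e u v = cyc_adj m n u v.
  by rewrite /bad negbK => /eqP.
have Scl j (u v : 'I_n) : u \in S j -> v \in S j -> u != v -> e u v.
  move=> uS vS nuv; apply/negPn/negP => neuv.
  move: uS vS; rewrite /S /pk; case: pickP => [[a b] /= /and4P [aL bL nab neab]|none].
  - have key (w : 'I_n) : w \in L j :\: (a |: (b |: (B a :|: B b))) ->
        [/\ w != a, w != b, ~~ bad a w, ~~ bad b w & w \in L j].
      case/setDP => wL H; rewrite !in_setU1 in_setU /B !inE !negb_or in H.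
      by case/and4P: H => k1 k2 k3 k4; split.
    case/key => ua ub bau bbu uL; case/key => va vb bav bbv vL.
    have eG x y : x \in L j -> y \in L j -> x != y -> ~~ bad x y -> e x y.
      by move=> xL yL nxy /nbadE ->; apply: sameG => //; rewrite (Lpart _ _ xL) (Lpart _ _ yL).
    apply: (C4c a u b v).
    + by apply: eG => //; rewrite eq_sym.
    + by rewrite es; apply: eG => //; rewrite eq_sym.
    + by apply: eG => //; rewrite eq_sym.
    + by rewrite es; apply: eG => //; rewrite eq_sym.
    + exact: neab.
    + exact: neuv.
    + exact: nab.
    + exact: nuv.
  - move=> uL vL; have := none (u, v); rewrite /= uL vL nuv.
    by rewrite neuv.
have Scard j : #|L j| <= #|S j| + (2 + 2 * D).
  rewrite /S /pk; case: pickP => [[a b] /= /and4P [aL bL _ _]|_]; last by rewrite leq_addr.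
  set X := a |: _.
  rewrite -(cardsID X (L j)) addnC leq_add2l.
  apply: leq_trans (subset_leq_card (subsetIr _ _)) _.
  rewrite /X !cardsU1.
  have hB (w : 'I_n) : w \in L j -> #|B w| <= D.
    by rewrite !inE => /andP [hw _]; rewrite leqNgt.
  have HU : #|B a :|: B b| <= #|B a| + #|B b| := leq_card_setU _ _.
  move: HU (hB _ aL) (hB _ bL).
  case: (a \notin _); case: (b \notin _) => /=; lia.
pose U j := [set y in S j | [exists x : 'I_n, [&& x \in S (x %% m), x %% m != j & bad x y]]].
pose T j := S j :\: U j.
have Ucard j : j < m -> #|U j| <= m * D.
  move=> jm.
  pose Uij (i : 'I_m) := [set y in S j | [exists x in S i, bad x y]].
  have sub : U j \subset \bigcup_(i : 'I_m | (i : nat) != j) Uij i.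
    apply/subsetP => y; rewrite inE => /andP [yS /existsP [x /and3P [xS xj bxy]]].
    apply/bigcupP; exists (Ordinal (ltn_pmod x m0)) => //=.
    by rewrite inE yS; apply/existsP; exists x; rewrite xS bxy.
  apply: leq_trans (subset_leq_card sub) _.
  apply: leq_trans (card_bigcup_le _ _) _.
  apply: (@leq_trans (\sum_(i : 'I_m) D)); last by rewrite sum_nat_const card_ord.
  rewrite big_mkcond; apply: leq_sum => i _; case: ifP => // ij.
  case: (set_0Vmem (S i)) => [S0 | [x0 x0S]].
    rewrite (_ : Uij i = set0) ?cards0 //; apply/setP => y; rewrite !inE.
    by apply/negbTE; apply/negP => /andP [_ /existsP [x]]; rewrite S0 inE.
  pose N (x : 'I_n) := [set y in S j | bad x y].
  have cG (u v : 'I_n) : u \in S i -> v \in S j -> cyc_adj m n u v = cadj m i j.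
    move=> uS vS; rewrite /cyc_adj (Spart _ _ uS) (Spart _ _ vS) andb_idl //.
    by move=> _; apply/negP => /eqP E1; move: ij; rewrite -(Spart _ _ uS) -(Spart _ _ vS) E1 eqxx.
  have dS (u v : 'I_n) : u \in S i -> v \in S j -> u != v.
    by move=> uS vS; apply/negP => /eqP E1; move: ij; rewrite -(Spart _ _ uS) -(Spart _ _ vS) E1 eqxx.
  have cmp x x' : x \in S i -> x' \in S i -> (N x \subset N x') || (N x' \subset N x).
    move=> xS x'S; apply/negPn/negP; rewrite negb_or => /andP [/subsetPn [y yN ynN] /subsetPn [y' y'N y'nN]].
    move: yN ynN y'N y'nN; rewrite !inE => /andP [yS bxy] + /andP [y'S bx'y'].
    rewrite yS y'S /= => nbx'y nbxy'.
    have nxx' : x != x' by apply/negP => /eqP E1; rewrite -E1 bxy in nbx'y.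
    have nyy' : y != y' by apply/negP => /eqP E1; rewrite -E1 bxy in nbxy'.
    have exx' := Scl _ _ _ xS x'S nxx'; have eyy' := Scl _ _ _ yS y'S nyy'.
    move: bxy nbx'y bx'y' nbxy'; rewrite /bad !cG //.
    case: (cadj m i j) => g1 g2 g3 g4.
    - have n1 : ~~ e x y by move: g1; case: (e x y).
      have n2 : ~~ e x' y' by move: g3; case: (e x' y').
      have p2 : e x' y by move: g2; case: (e x' y).
      have p4 : e x y' by move: g4; case: (e x y').
      apply: (C4c x y' y x').
      + exact: p4.
      + by rewrite es.
      + by rewrite es.
      + by rewrite es.
      + exact: n1.
      + by rewrite es.
      + exact: dS.
      + by rewrite eq_sym dS.
    - have p1 : e x y by move: g1; case: (e x y).
      have p3 : e x' y' by move: g3; case: (e x' y').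
      have n2 : ~~ e x' y by move: g2; case: (e x' y).
      have n4 : ~~ e x y' by move: g4; case: (e x y').
      apply: (C4c x y y' x').
      + exact: p1.
      + exact: eyy'.
      + by rewrite es.
      + by rewrite es.
      + exact: n4.
      + by rewrite es.
      + exact: dS.
      + by rewrite eq_sym dS.
  case: (@arg_maxnP _ x0 (fun x => x \in S i) (fun x => #|N x|) x0S) => xs xsS xsmax.
  have : Uij i \subset N xs.
    apply/subsetP => y; rewrite inE => /andP [yS /existsP [x /andP [xS bxy]]].
    have yN : y \in N x by rewrite inE yS bxy.
    case/orP: (cmp x xs xS xsS) => [s1 | s2]; first exact: (subsetP s1).
    have : N xs == N x by rewrite eqEcard s2 /=; exact: (xsmax _ xS).
    by move/eqP ->.
  move/subset_leq_card/leq_trans; apply.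
  apply: leq_trans (Slow _ _ xsS).
  by apply/subset_leq_card/subsetP => y; rewrite !inE => /andP [].
have Tcard j : j < m -> t <= #|T j|.
  move=> jm.
  have hL : #|P j| <= #|L j| + #|high|.
    rewrite /L -(cardsID high (P j)) addnC leq_add2l; exact/subset_leq_card/subsetIr.
  have hT : #|S j| <= #|T j| + #|U j|.
    rewrite /T -(cardsID (U j) (S j)) addnC leq_add2l; exact/subset_leq_card/subsetIr.
  have Mp : 0 < M by rewrite /M; lia.
  apply: (@arith2 m n t (n %/ m) #|high| D M _ _ _ _ _ m2 erefl (ltn_ceil _ m0) (h3 j jm) hL (Scard j) hT (Ucard j jm) _ (leq_trunc_div _ _) hn).
  exact: (@arith1 m n #|high| D E M m2 erefl h2 hE (ltn_ceil _ Mp)).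
have n0 : 0 < n by lia.
pose d0 : 'I_n := Ordinal n0.
pose f (x : 'I_(m*t)) : 'I_n := nth d0 (enum (T (x %% m))) (x %/ m).
have xm (x : 'I_(m*t)) : x %% m < m := ltn_pmod _ m0.
have xt (x : 'I_(m*t)) : x %/ m < t by rewrite ltn_divLR //; have := ltn_ord x; lia.
have xsz (x : 'I_(m*t)) j : j < m -> x %/ m < size (enum (T j)).
  by move=> jm; rewrite -cardE; apply: leq_trans (Tcard _ jm).
have fT x : f x \in T (x %% m).
  by rewrite -mem_enum; apply: mem_nth; apply: xsz.
have TS j v : v \in T j -> v \in S j by rewrite in_setD => /andP [].
have fpart x : f x %% m = x %% m := Spart _ _ (TS _ _ (fT x)).
have finj : injective f.
  move=> x y fxy.
  have pxy : x %% m = y %% m by rewrite -fpart fxy fpart.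
  move: fxy; rewrite /f pxy => /eqP; rewrite nth_uniq ?enum_uniq ?xsz // => /eqP dxy.
  by apply: val_inj; rewrite /= (divn_eq x m) (divn_eq y m) pxy dxy.
exists f; split => // x y /=.
rewrite /cyc_adj /=.
case: (eqVneq x y) => [-> | nxy]; first by rewrite ei.
rewrite /=.
have nfxy : f x != f y by apply: contra_neq nxy; apply: finj.
case: (eqVneq (x %% m) (y %% m)) => [pe | pne].
- rewrite pe; have -> : cadj m (y %% m) (y %% m) by apply/cadjP; left.
  apply: (Scl (y %% m) _ _ _ _ nfxy); apply: TS; [rewrite -pe|]; exact: fT.
- have nb : ~~ bad (f x) (f y).
    have := fT y; rewrite /T in_setD => /andP [nU _].
    apply/negP => b; move/negP: nU; apply; rewrite inE (TS _ _ (fT y)) /=; apply/existsP; exists (f x).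
    by rewrite !fpart (TS _ _ (fT x)) pne b.
  by rewrite (nbadE _ _ nb) /cyc_adj nfxy !fpart.
Qed.

Definition mk (k : nat) : nat := k + 5.
Definition epsk (k : nat) : R := (/ (64 * INR (mk k) ^ 3))%R.

Lemma mk5 k : (5 <= INR (mk k))%R.
Proof.
have -> : 5%R = INR 5 by rewrite INR_IZR_INZ.
by apply: le_INR; rewrite /mk; lia.
Qed.

Lemma epsk_pos k : (0 < epsk k)%R.
Proof.
rewrite /epsk; apply: Rinv_0_lt_compat.
have : (5 <= INR (mk k))%R by apply: mk5.
move=> h; have : (0 < INR (mk k) ^ 3)%R by apply: pow_lt; lra.
lra.
Qed.

Lemma epsk_le k : (epsk k <= / INR (mk k))%R.
Proof.
rewrite /epsk; apply: Rinv_le_contravar.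
  have : (5 <= INR (mk k))%R by apply: mk5.
  lra.
have : (5 <= INR (mk k))%R by apply: mk5.
move=> h; set x := INR (mk k) in h *; simpl; nra.
Qed.

Lemma epsk_cv : Un_cv epsk 0%R.
Proof.
move=> eps heps; case: (@archimed_cor1 eps heps) => N [hN N0].
exists N => k hk; rewrite /R_dist Rminus_0_r Rabs_right; last by have := epsk_pos k; lra.
apply: Rle_lt_trans (epsk_le k) _; apply: Rle_lt_trans hN.
apply: Rinv_le_contravar; first by apply: lt_0_INR; lia.
by apply: le_INR; rewrite /mk; lia.
Qed.

Lemma real_to_nat m n E : (INR E < / (64 * INR m ^ 3) * INR n ^ 2)%R -> 0 < m ->
  64 * m^3 * E < n^2.
Proof.
move=> h m0.
have hm : (0 < INR m)%R by apply: lt_0_INR; lia.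
have ha : (0 < 64 * INR m ^ 3)%R by have := pow_lt _ 3 hm; lra.
have h2 : (64 * INR m ^ 3 * INR E < INR n ^ 2)%R.
  have := Rmult_lt_compat_l _ _ _ ha h.
  rewrite -Rmult_assoc Rinv_r; [lra | lra].
apply/ltP; apply: INR_lt.
have -> : m^3 = m * m * m by rewrite !expnS expn0 muln1 mulnA.
have -> : n^2 = n * n by rewrite !expnS expn0 muln1.
rewrite !mult_INR.
have -> : INR 64 = 64%R by rewrite INR_IZR_INZ.
simpl in h2; nra.
Qed.

Theorem theorem5p1 :
  forall g : R -> nat,
  exists (Fam : graph -> Prop) (eps : nat -> R),
    Fam C4 /\
    (forall k, (0 < eps k)%R /\ (eps k < 1/2)%R) /\
    Un_cv eps 0%R /\
    forall k : nat, (1 <= k)%N ->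
      exists n0 : nat, forall n : nat, (n0 <= n)%N ->
        exists G : graph,
          gsize G = n /\
          far_from_free (eps k) Fam G /\
          forall f : 'I_(g (eps k)) -> 'I_(gsize G),
            injective f -> induced_free Fam (induced_sub G f).
Proof.
move=> g.
exists (fun F => F = C4 \/ exists j, F = cyc (mk j) (mk j * (g (epsk j)).+1)), epsk.
split; first by left.
split.
  move=> k; split; first exact: epsk_pos.
  have := epsk_le k.
  have : (5 <= INR (mk k))%R by apply: mk5.
  move=> h5 hle; apply: Rle_lt_trans hle _.
  apply: (Rle_lt_trans _ (/ 5)%R); last lra.
  apply: Rinv_le_contravar; lra.
split; first exact: epsk_cv.
move=> k _.
exists (2 * mk k * (g (epsk k)).+1 + 6 * mk k).+1 => n hn.
exists (cyc (mk k) n); split => //; split.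
- move=> e es ei hfree.
  apply: Rnot_lt_le => hlt.
  apply: (hfree (cyc (mk k) (mk k * (g (epsk k)).+1))); first by right; exists k.
  apply: core => //.
  + by move=> hc; apply: (hfree C4); [left|].
  + by rewrite /mk; lia.
  + by apply: (real_to_nat hlt); rewrite /mk; lia.
- move=> f finj F [-> | [j ->]] hc; have hc' := copy_sub finj hc.
  + by apply: (@no_C4 (mk k) n) => //; rewrite /mk; lia.
  + case: (eqVneq j k) => [ejk | njk].
    * subst j; have := copy_size hc; rewrite /= /mk; nia.
    * apply: (@no_blow (mk k) n (mk j) (g (epsk j)).+1) hc' => //.
      -- by rewrite /mk; lia.
      -- by rewrite /mk; apply/negP => /eqP; lia.
      -- by rewrite /mk; lia.
Qed.
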